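(* Let $m,n\ge 1$ be integers and $\beta>0$. Let $U:\mathbb{R}^m\to\mathbb{R}$, let $\mathbf m:\mathbb{R}^m\to\mathbb{R}^{m\times m}$ take values in symmetric positive definite matrices, let $\mathbf H:\mathbb{R}^m\to\mathbb{R}^{m\times nm}$, and let $\boldsymbol\Gamma,\mathbf D:\mathbb{R}^m\to\mathbb{R}^{nm\times nm}$, all smooth. Define on $\widehat{\mathbf z}=(\mathbf q,\mathbf p,\boldsymbol\chi)\in\mathbb{R}^m\times\mathbb{R}^m\times\mathbb{R}^{nm}$ the extended free energy $$\widehat F(\mathbf q,\mathbf p,\boldsymbol\chi)=U(\mathbf q)+\tfrac12\mathbf p^\top\mathbf m(\mathbf q)^{-1}\mathbf p+\tfrac12\beta^{-1}\ln\det[\mathbf m(\mathbf q)]+\tfrac12\boldsymbol\chi^\top\boldsymbol\chi,$$ and consider the SDE $$\mathrm d\begin{pmatrix}\mathbf q\\ \mathbf p\\ \boldsymbol\chi\end{pmatrix}=\begin{pmatrix}0&\mathbf I&0\\ -\mathbf I&0&-\mathbf H(\mathbf q)\\ 0&\mathbf H(\mathbf q)^\top&\boldsymbol\Gamma(\mathbf q)\end{pmatrix}\nabla\widehat F(\mathbf q,\mathbf p,\boldsymbol\chi)\,\mathrm dt+\begin{pmatrix}0\\0\\ \mathbf D(\mathbf q)\,\mathrm d\mathbf W_t\end{pmatrix},$$ where $\mathbf W_t$ is a standard Brownian motion in $\mathbb{R}^{nm}$. If $\mathbf D(\mathbf q)\mathbf D(\mathbf q)^\top=-\beta^{-1}\big(\boldsymbol\Gamma(\mathbf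 q)+\boldsymbol\Gamma(\mathbf q)^\top\big)$ for all $\mathbf q$, then this SDE has the invariant distribution $$\rho_0(\mathbf q,\mathbf p,\boldsymbol\chi)\propto\frac{1}{(2\pi)^{m/2}\det[\mathbf m(\mathbf q)]^{1/2}}\exp\!\Big[-\beta\Big(U(\mathbf q)+\tfrac12\mathbf p^\top\mathbf m(\mathbf q)^{-1}\mathbf p+\tfrac12\boldsymbol\chi^\top\boldsymbol\chi\Big)\Big],$$ i.e. $\rho_0$ is a stationary solution of the associated Fokker–Planck equation.
   Context: This is a reduced (coarse-grained) model: $\mathbf q\in\mathbb{R}^m$ are coarse-grained coordinates, $\mathbf p$ their momenta, $\boldsymbol\chi=(\boldsymbol\chi_1;\dots;\boldsymbol\chi_n)$ with $\boldsymbol\chi_i\in\mathbb{R}^m$ auxiliary variables, $U$ a free energy, $\mathbf m(\mathbf q)$ a position-dependent mass matrix, and $\beta$ the inverse temperature. The density $\rho_0$ is assumed normalizable (e.g. $\int e^{-\beta U(\mathbf q)}\,\mathrm d\mathbf q<\infty$). Writing the SDE as $\mathrm d\widehat{\mathbf z}=\widehat{\mathbf J}(\mathbf q)\nabla\widehat F\,\mathrm dt+\widehat{\boldsymbol\Sigma}(\mathbf q)\,\mathrm d\mathbf W_t$, the Fokker–Planck equation is $\partial_t\rho=\nabla\cdot\big(-\widehat{\mathbf J}(\mathbf q)\nabla\widehat F\,\rho+\tfrac12\nabla\cdot(\widehat{\boldsymbol\Sigma}(\mathbf q)\widehat{\boldsymbol\Sigma}(\mathbf q)^\top\rho)\big)$.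 *)

(* Defs.v *)
From mathcomp Require Import all_boot all_order all_algebra all_classical all_reals all_analysis.
Import numFieldNormedType.Exports.
Set Implicit Arguments. Unset Strict Implicit. Unset Printing Implicit Defensive.
Import Order.TTheory GRing.Theory Num.Theory.
Local Open Scope ring_scope.

Fixpoint iter_deriv {R : realType} {V W : normedModType R}
    (vs : seq V) (f : V -> W) : V -> W :=
  match vs with
  | [::] => f
  | v :: vs' => fun x => derive (iter_deriv vs' f) x v
  end.

Definition smooth {R : realType} {V W : normedModType R} (f : V -> W) : Prop :=
  forall (vs : seq V) (x : V), differentiable (iter_deriv vs f) x.

Definition spd {R : realType} {k : nat} (A : 'M[R]_k) : Prop :=
  A^T = A /\ forall v : 'rV[R]_k, v != 0 -> 0 < (v *m A *m v^T) 0 0.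

Definition qof {R : realType} {m n : nat} (z : 'rV[R]_(m + m + n * m)) : 'rV[R]_m :=
  lsubmx (lsubmx z).
Definition pof {R : realType} {m n : nat} (z : 'rV[R]_(m + m + n * m)) : 'rV[R]_m :=
  rsubmx (lsubmx z).
Definition chiof {R : realType} {m n : nat} (z : 'rV[R]_(m + m + n * m)) : 'rV[R]_(n * m) :=
  rsubmx z.

Definition partial {R : realType} {N : nat} (i : 'I_N) (g : 'rV[R]_N -> R)
    (z : 'rV[R]_N) : R :=
  derive g z (delta_mx 0 i).

Definition grad {R : realType} {N : nat} (g : 'rV[R]_N -> R) (z : 'rV[R]_N) : 'cV[R]_N :=
  \col_i partial i g z.

Definition Fhat {R : realType} {m n : nat} (beta : R) (U : 'rV[R]_m -> R)
    (mm : 'rV[R]_m -> 'M[R]_m) (z : 'rV[R]_(m + m + n * m)) : R :=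
  let q := qof z in let p := pof z in let chi := chiof z in
  U q + 2^-1 * (p *m invmx (mm q) *m p^T) 0 0
      + 2^-1 * beta^-1 * ln (\det (mm q))
      + 2^-1 * (chi *m chi^T) 0 0.

Definition Jhat {R : realType} {m n : nat} (H : 'M[R]_(m, n * m))
    (Gam : 'M[R]_(n * m)) : 'M[R]_(m + m + n * m) :=
  block_mx (block_mx (0 : 'M[R]_m) 1%:M (- 1%:M) 0)
           (col_mx (0 : 'M[R]_(m, n * m)) (- H))
           (row_mx (0 : 'M[R]_(n * m, m)) H^T)
           Gam.

Definition Sighat {R : realType} {m n : nat} (D : 'M[R]_(n * m)) :
    'M[R]_(m + m + n * m, n * m) :=
  col_mx (0 : 'M[R]_(m + m, n * m)) D.

Definition drift {R : realType} {m n : nat} (beta : R) (U : 'rV[R]_m -> R)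
    (mm : 'rV[R]_m -> 'M[R]_m) (H : 'rV[R]_m -> 'M[R]_(m, n * m))
    (Gam : 'rV[R]_m -> 'M[R]_(n * m)) (z : 'rV[R]_(m + m + n * m))
    : 'cV[R]_(m + m + n * m) :=
  Jhat (H (qof z)) (Gam (qof z)) *m grad (@Fhat R m n beta U mm) z.

Definition FP_rhs {R : realType} {m n : nat} (beta : R) (U : 'rV[R]_m -> R)
    (mm : 'rV[R]_m -> 'M[R]_m) (H : 'rV[R]_m -> 'M[R]_(m, n * m))
    (Gam D : 'rV[R]_m -> 'M[R]_(n * m)) (rho : 'rV[R]_(m + m + n * m) -> R)
    (z : 'rV[R]_(m + m + n * m)) : R :=
  \sum_(i < m + m + n * m)
    partial i (fun y =>
      - (drift beta U mm H Gam y) i 0 * rho y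
      + 2^-1 * \sum_(j < m + m + n * m)
          partial j (fun y' =>
            (Sighat (D (qof y')) *m (Sighat (D (qof y')))^T) i j * rho y') y) z.

(* rho_0 up to the normalisation constant c *)
Definition rho0 {R : realType} {m n : nat} (c beta : R) (U : 'rV[R]_m -> R)
    (mm : 'rV[R]_m -> 'M[R]_m) (z : 'rV[R]_(m + m + n * m)) : R :=
  let q := qof z in let p := pof z in let chi := chiof z in
  c * ((Num.sqrt ((2 * pi) ^+ m) * Num.sqrt (\det (mm q)))^-1
       * expR (- beta * (U q + 2^-1 * (p *m invmx (mm q) *m p^T) 0 0
                             + 2^-1 * (chi *m chi^T) 0 0))).

(* Main.v *)
Require Import Defs.
From mathcomp Require Import all_boot all_order all_algebra all_classical all_reals all_analysis.
From mathcomp.algebra_tactics Require Import ring lra.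
Import numFieldNormedType.Exports.
Import Order.TTheory GRing.Theory Num.Theory.
Local Open Scope classical_set_scope.
Local Open Scope ring_scope.
Unset Printing Implicit Defensive.

Set Implicit Arguments. Unset Strict Implicit.

Section Gen.
Variables (R : realType) (V : normedModType R).
Implicit Types (f g : V -> R) (u v w x y : V).

Definition Const w f := forall x (t : R), f (t *: w + x) = f x.

Lemma derive_line f g a v : (forall h : R, f (h *: v + a) = g (h *: v + a)) ->
  'D_v f a = 'D_v g a.
Proof.
move=> fg; rewrite /derive.
suff -> : (fun h : R => h^-1 *: ((f \o shift a) (h *: v) - f a)) =
          (fun h : R => h^-1 *: ((g \o shift a) (h *: v) - g a)) by [].
apply/funext => h /=; have := fg 0; rewrite scale0r add0r => ->; by rewrite fg.
Qed.

Lemma derivable_line f g a v : (forall h : R, f (h *: v + a) = g (h *: v + a)) ->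
  derivable f a v -> derivable g a v.
Proof.
move=> fg; rewrite /derivable.
suff -> : (fun h : R => h^-1 *: ((f \o shift a) (h *: v) - f a)) =
          (fun h : R => h^-1 *: ((g \o shift a) (h *: v) - g a)) by [].
apply/funext => h /=; have := fg 0; rewrite scale0r add0r => ->; by rewrite fg.
Qed.

Lemma Const_is_derive f w a : Const w f -> is_derive a w f 0.
Proof.
move=> Cf.
have E : (fun h : R => h^-1 *: ((f \o shift a) (h *: w) - f a)) = cst 0.
  by apply/funext => h /=; rewrite Cf subrr scaler0.
have cv : (fun h : R => h^-1 *: ((f \o shift a) (h *: w) - f a)) @ 0^' --> (0:R).
  by rewrite E; exact: cvg_cst.
apply: DeriveDef; first by apply/cvg_ex; exists 0.
exact: cvg_lim cv.
Qed.

Lemma Const_derive f w u : Const w f -> Const w ('D_u f).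
Proof.
move=> Cf x t; rewrite /derive.
suff -> : (fun h : R => h^-1 *: ((f \o shift (t *: w + x)) (h *: u) - f (t *: w + x))) =
          (fun h : R => h^-1 *: ((f \o shift x) (h *: u) - f x)) by [].
apply/funext => h /=; by rewrite addrCA Cf Cf.
Qed.

Lemma ConstM g f y v : Const v g -> (g y != 0 -> derivable f y v) ->
  derivable (fun x => g x * f x) y v /\ 'D_v (fun x => g x * f x) y = g y * 'D_v f y.
Proof.
move=> Cg df.
have L : forall h : R, g (h *: v + y) * f (h *: v + y) = (fun x => g y * f x) (h *: v + y).
  by move=> h; rewrite Cg.
have [g0|gn0] := eqVneq (g y) 0.
  have L0 : forall h : R, g (h *: v + y) * f (h *: v + y) = (cst 0 : V -> R) (h *: v + y).
    by move=> h; rewrite Cg g0 mul0r.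
  split; first by apply: (@derivable_line (cst 0)) (derivable_cst 0 y v) => h; by rewrite L0.
  by rewrite (@derive_line (fun x => g x * f x) (cst 0) y v L0) derive_cst g0 mul0r.
split; first by apply: (@derivable_line (fun x => g y * f x)) (derivableM (derivable_cst (g y) y v) (df gn0)) => h; by rewrite L.
rewrite (@derive_line (fun x => g x * f x) (fun x => g y * f x) y v L); exact: deriveMl (df gn0).
Qed.


Definition Good u v f := forall y, [/\ derivable f y u, derivable f y v,
  derivable ('D_u f) y v, derivable ('D_v f) y u &
  'D_v ('D_u f) y = 'D_u ('D_v f) y].

Lemma Good_sym u v f : Good u v f -> Good v u f.
Proof. move=> G y; have [? ? ? ? E] := G y; split; [assumption|assumption|assumption|assumption|exact: esym E]. Qed.

Lemma Good_prod u v f g : Const v f -> Const u g ->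
  (forall y, derivable f y u) -> (forall y, derivable g y v) ->
  Good u v (fun y => f y * g y).
Proof.
move=> Cf Cg df dg.
have dfv y : derivable f y v by have [] := Const_is_derive y Cf.
have dgu y : derivable g y u by have [] := Const_is_derive y Cg.
have Dfv y : 'D_v f y = 0 by have [] := Const_is_derive y Cf.
have Dgu y : 'D_u g y = 0 by have [] := Const_is_derive y Cg.
have Eu : 'D_u (fun y => f y * g y) = (fun y => g y * 'D_u f y).
  apply/funext => y; rewrite (deriveM (df y) (dgu y)) Dgu /=.
  by rewrite scaler0 add0r.
have Ev : 'D_v (fun y => f y * g y) = (fun y => f y * 'D_v g y).
  apply/funext => y; rewrite (deriveM (dfv y) (dg y)) Dfv /=.
  by rewrite scaler0 addr0.
have CDf : Const v ('D_u f) by exact: Const_derive.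
have CDg : Const u ('D_v g) by exact: Const_derive.
have dDfv y : derivable ('D_u f) y v by have [] := Const_is_derive y CDf.
have dDgu y : derivable ('D_v g) y u by have [] := Const_is_derive y CDg.
have DDfv y : 'D_v ('D_u f) y = 0 by have [] := Const_is_derive y CDf.
have DDgu y : 'D_u ('D_v g) y = 0 by have [] := Const_is_derive y CDg.
move=> y; split.
- exact: derivableM.
- exact: derivableM.
- by rewrite Eu; apply: derivableM.
- by rewrite Ev; apply: derivableM.
- rewrite Eu Ev.
  rewrite (deriveM (dg y) (dDfv y)) (deriveM (df y) (dDgu y)) DDfv DDgu /=.
  rewrite !scaler0 !add0r; exact: mulrC.
Qed.

Lemma Good_constv u v f : Const v f -> (forall y, derivable f y u) -> Good u v f.
Proof.
move=> Cf df.
have -> : f = (fun y => f y * (cst 1 : V -> R) y) by apply/funext => y; rewrite /= mulr1.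
apply: Good_prod; [exact: Cf| by move=> x t | exact: df | move=> y; exact: derivable_cst].
Qed.

Lemma Good_constu u v f : Const u f -> (forall y, derivable f y v) -> Good u v f.
Proof. by move=> Cf df; apply/Good_sym/Good_constv. Qed.

Lemma Good_add u v f g : Good u v f -> Good u v g -> Good u v (fun y => f y + g y).
Proof.
move=> Gf Gg.
have Eu : 'D_u (fun y => f y + g y) = (fun y => 'D_u f y + 'D_u g y).
  apply/funext => y; have [? ? ? ? ?] := Gf y; have [? ? ? ? ?] := Gg y.
  exact: (deriveD (f:=f) (g:=g)).
have Ev : 'D_v (fun y => f y + g y) = (fun y => 'D_v f y + 'D_v g y).
  apply/funext => y; have [? ? ? ? ?] := Gf y; have [? ? ? ? ?] := Gg y.
  exact: (deriveD (f:=f) (g:=g)).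
move=> y; have [? ? ? ? E1] := Gf y; have [? ? ? ? E2] := Gg y; split.
- exact: (derivableD (f:=f) (g:=g)).
- exact: (derivableD (f:=f) (g:=g)).
- rewrite Eu. exact: (derivableD (f:='D_u f) (g:='D_u g)).
- rewrite Ev. exact: (derivableD (f:='D_v f) (g:='D_v g)).
- rewrite Eu Ev.
  rewrite (deriveD (f:='D_u f) (g:='D_u g)); [|assumption|assumption].
  rewrite (deriveD (f:='D_v f) (g:='D_v g)); [|assumption|assumption].
  rewrite E1 E2.
  reflexivity.
Qed.

Lemma Good_scale u v f (c : R) : Good u v f -> Good u v (fun y => c * f y).
Proof.
move=> Gf.
have Eu : 'D_u (fun y => c * f y) = (fun y => c * 'D_u f y).
  apply/funext => y; have [H1 _ _ _ _] := Gf y; exact: (deriveMl c H1).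
have Ev : 'D_v (fun y => c * f y) = (fun y => c * 'D_v f y).
  apply/funext => y; have [_ H2 _ _ _] := Gf y; exact: (deriveMl c H2).
move=> y; have [H1 H2 H3 H4 E1] := Gf y; split.
- exact: (derivableM (derivable_cst c y u) H1).
- exact: (derivableM (derivable_cst c y v) H2).
- rewrite Eu; exact: (derivableM (derivable_cst c y v) H3).
- rewrite Ev; exact: (derivableM (derivable_cst c y u) H4).
- rewrite Eu Ev (deriveMl c H3) (deriveMl c H4) E1. reflexivity.
Qed.

Lemma Good_cst u v (c : R) : Good u v (fun _ => c).
Proof. apply: Good_constv; [by move=> x t| move=> y; exact: derivable_cst]. Qed.

Lemma Good_sum (I : Type) (r : seq I) (P : pred I) u v (F : I -> V -> R) :
  (forall i, P i -> Good u v (F i)) -> Good u v (fun y => \sum_(i <- r | P i) F i y).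
Proof.
move=> GF; elim: r => [|a r IH].
  have -> : (fun y => \sum_(i <- [::] | P i) F i y) = (fun _ => 0).
    by apply/funext => y; rewrite big_nil.
  exact: Good_cst.
case Pa: (P a).
  have -> : (fun y => \sum_(i <- a :: r | P i) F i y) =
     (fun y => F a y + \sum_(i <- r | P i) F i y).
    by apply/funext => y; rewrite big_cons Pa.
  exact: Good_add (GF _ Pa) IH.
have -> : (fun y => \sum_(i <- a :: r | P i) F i y) =
   (fun y => \sum_(i <- r | P i) F i y).
  by apply/funext => y; rewrite big_cons Pa.
exact: IH.
Qed.

End Gen.

Section Diff.
Variables (R : realType) (V : normedModType R).

Lemma diff_bsum (I : Type) (r : seq I) (P : pred I) (F : I -> V -> R) x :
  (forall i, P i -> differentiable (F i) x) ->
  differentiable (fun y => \sum_(i <- r | P i) F i y) x.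
Proof.
move=> dF; elim: r => [|a r IH].
  have -> : (fun y => \sum_(i <- [::] | P i) F i y) = cst 0.
    by apply/funext => y; rewrite big_nil.
  exact: differentiable_cst.
case Pa: (P a).
  have -> : (fun y => \sum_(i <- a :: r | P i) F i y) =
     (F a + (fun y => \sum_(i <- r | P i) F i y)).
    by apply/funext => y; rewrite big_cons Pa.
  exact: differentiableD (dF _ Pa) IH.
have -> : (fun y => \sum_(i <- a :: r | P i) F i y) =
   (fun y => \sum_(i <- r | P i) F i y).
  by apply/funext => y; rewrite big_cons Pa.
exact: IH.
Qed.

Lemma diff_bprod (I : Type) (r : seq I) (P : pred I) (F : I -> V -> R) x :
  (forall i, P i -> differentiable (F i) x) ->
  differentiable (fun y => \prod_(i <- r | P i) F i y) x.
Proof.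
move=> dF; elim: r => [|a r IH].
  have -> : (fun y => \prod_(i <- [::] | P i) F i y) = cst 1.
    by apply/funext => y; rewrite big_nil.
  exact: differentiable_cst.
case Pa: (P a).
  have -> : (fun y => \prod_(i <- a :: r | P i) F i y) =
     (F a * (fun y => \prod_(i <- r | P i) F i y)).
    by apply/funext => y; rewrite big_cons Pa.
  exact: differentiableM (dF _ Pa) IH.
have -> : (fun y => \prod_(i <- a :: r | P i) F i y) =
   (fun y => \prod_(i <- r | P i) F i y).
  by apply/funext => y; rewrite big_cons Pa.
exact: IH.
Qed.

Lemma diff_mulc (c : R) (f : V -> R) x : differentiable f x ->
  differentiable (fun y => c * f y) x.
Proof.
move=> df; have -> : (fun y => c * f y) = (cst c * f) by [].
exact: differentiableM.
Qed.

Definition ED a b (M : V -> 'M[R]_(a, b)) x :=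
  forall i j, differentiable (fun y => M y i j) x.

Lemma ED_diff a b (M : V -> 'M[R]_(a, b)) x : differentiable M x -> ED M x.
Proof.
move=> dM i j.
have -> : (fun y => M y i j) = (fun N : 'M[R]_(a, b) => N i j) \o M by [].
apply: differentiable_comp => //; exact: differentiable_coord.
Qed.

Lemma ED_mul a b c (A : V -> 'M[R]_(a, b)) (B : V -> 'M[R]_(b, c)) x :
  ED A x -> ED B x -> ED (fun y => A y *m B y) x.
Proof.
move=> dA dB i j.
have -> : (fun y => (A y *m B y) i j) = (fun y => \sum_k (A y i k * B y k j)).
  by apply/funext => y; rewrite mxE.
apply: diff_bsum => k _; exact: differentiableM.
Qed.

Lemma ED_tr a b (A : V -> 'M[R]_(a, b)) x : ED A x -> ED (fun y => (A y)^T) x.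
Proof.
move=> dA i j.
have -> : (fun y => (A y)^T i j) = (fun y => A y j i) by apply/funext => y; rewrite mxE.
exact: dA.
Qed.

Lemma diff_det a (A : V -> 'M[R]_a) x : ED A x -> differentiable (fun y => \det (A y)) x.
Proof.
move=> dA; rewrite /determinant.
apply: diff_bsum => s _; apply: diff_mulc; apply: diff_bprod => i _; exact: dA.
Qed.

Lemma ED_sub a (A : V -> 'M[R]_a.+1) x i0 j0 : ED A x ->
  ED (fun y => row' i0 (col' j0 (A y))) x.
Proof.
move=> dA i j.
have -> : (fun y => row' i0 (col' j0 (A y)) i j) = (fun y => A y (lift i0 i) (lift j0 j)).
  by apply/funext => y; rewrite !mxE.
exact: dA.
Qed.

Lemma ED_inv a (A : V -> 'M[R]_a) x : (forall y, A y \in unitmx) -> ED A x ->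
  ED (fun y => invmx (A y)) x.
Proof.
move=> uA dA i j.
have -> : (fun y => invmx (A y) i j) =
   (fun y => (\det (A y))^-1 * cofactor (A y) j i).
  by apply/funext => y; rewrite /invmx uA !mxE.
have ddet := diff_det dA.
apply: differentiableM.
  apply: differentiableV => //.
  by have := uA x; rewrite unitmxE unitfE.
case: a A uA dA i j ddet => [|a] A uA dA i j ddet; first by case: i.
rewrite /cofactor; apply: diff_mulc; apply: diff_det; exact: ED_sub.
Qed.

Lemma diff_ln (f : V -> R) x : differentiable f x -> 0 < f x ->
  differentiable (fun y => ln (f y)) x.
Proof.
move=> df fx; have -> : (fun y => ln (f y)) = (@ln R) \o f by [].
apply: differentiable_comp => //; apply/derivable1_diffP.
by have [] := is_derive1_ln fx.
Qed.

End Diff.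

Section Det.
Variable R : realType.

Lemma vvT_gt0 k (v : 'rV[R]_k) : v != 0 -> 0 < (v *m v^T) 0 0.
Proof.
move=> vn0; rewrite mxE.
have [i vi] : exists i, v 0 i != 0.
  apply/existsP; apply: contraNT vn0 => /existsPn H; apply/eqP/matrixP => a b.
  by rewrite ord1 mxE; apply/eqP/negbNE/H.
rewrite (bigD1 i) //= mxE ltr_pwDl //.
  by rewrite lt_def sqrf_eq0 vi /= -expr2 sqr_ge0.
by apply: sumr_ge0 => j _; rewrite mxE -expr2 sqr_ge0.
Qed.

Lemma pd_det_neq0 k (A : 'M[R]_k) :
  (forall v : 'rV[R]_k, v != 0 -> 0 < (v *m A *m v^T) 0 0) -> \det A != 0.
Proof.
move=> pd; apply/negP => /det0P [v vn0 vA].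
by have := pd v vn0; rewrite vA mul0mx mxE ltxx.
Qed.

Lemma spd_det_gt0 k (A : 'M[R]_k) : spd A -> 0 < \det A.
Proof.
case=> _ pd.
pose B (t : R) : 'M[R]_k := (1 - t) *: 1%:M + t *: A.
have pdB t : 0 <= t <= 1 -> forall v : 'rV[R]_k, v != 0 -> 0 < (v *m B t *m v^T) 0 0.
  move=> /andP[t0 t1] v vn0.
  rewrite /B mulmxDr -!scalemxAr mulmx1 mulmxDl -!scalemxAl.
  have -> : ((1 - t) *: (v *m v^T) + t *: (v *m A *m v^T)) 0 0 =
     (1 - t) * (v *m v^T) 0 0 + t * (v *m A *m v^T) 0 0 by rewrite !mxE.
  have h1 := vvT_gt0 vn0; have h2 := pd v vn0.
  have [->|tn0] := eqVneq t 0; first by rewrite subr0 mul1r mul0r addr0.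
  have tp : 0 < t by rewrite lt_def tn0.
  by rewrite ltr_wpDl ?mulr_gt0 // mulr_ge0 // ?subr_ge0 // ltW.
pose f (t : R) := \det (B t).
have cf : continuous f.
  move=> t; apply: differentiable_continuous; apply: diff_det => i j.
  have -> : (fun y : R => B y i j) = (fun y => (1 - y) * (1%:M : 'M[R]_k) i j + y * A i j).
    by apply/funext => y; rewrite !mxE.
  apply: differentiableD; apply: differentiableM => //.
have f0 : f 0 = 1 by rewrite /f /B subr0 scale1r scale0r addr0 det1.
have f1 : f 1 = \det A by rewrite /f /B subrr scale0r scale1r add0r.
rewrite -f1 lt_def; apply/andP; split.
  by rewrite f1 pd_det_neq0.
rewrite leNgt; apply/negP => f1lt.
have [c cin fc] : exists2 c, c \in `[0, 1] & f c = 0.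
  apply: IVT => //; first exact: continuous_subspaceT.
  by rewrite f0 ge_min le_max ler01 (ltW f1lt) orbT.
move: cin; rewrite in_itv /= => cin.
by have := pd_det_neq0 (pdB c cin); rewrite -/(f c) fc eqxx.
Qed.

End Det.

Section Exp.
Variables (R : realType) (V : normedModType R).

Lemma derive1P (f : V -> R) x v :
  'D_v f x = 'D_1 (fun h : R => f (h *: v + x)) 0.
Proof.
rewrite /derive.
suff -> : (fun h : R => h^-1 *: ((f \o shift x) (h *: v) - f x)) =
   (fun h : R => h^-1 *: (((fun h : R => f (h *: v + x)) \o shift 0) (h *: 1) - f (0 *: v + x))) by [].
by apply/funext => h /=; rewrite addr0 scale0r add0r [_%:A]mulr1.
Qed.

Lemma derive_expR_comp (g : V -> R) y v : derivable g y v ->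
  derivable (fun x => expR (g x)) y v /\
  'D_v (fun x => expR (g x)) y = expR (g y) * 'D_v g y.
Proof.
move=> dg; have dg1 := (derivable1P g y v).1 dg.
have de : derivable (@expR R) ((fun h : R => g (h *: v + y)) 0) 1 by exact: derivable_expR.
split.
  apply/derivable1P.
  have -> : (fun h : R => expR (g (h *: v + y))) = expR \o (fun h : R => g (h *: v + y)) by [].
  apply/derivable1_diffP; apply: differentiable_comp; apply/derivable1_diffP => //.
rewrite derive1P (derive1P g).
have -> : (fun h : R => expR (g (h *: v + y))) = expR \o (fun h : R => g (h *: v + y)) by [].
rewrite -derive1E derive1_comp // -!derive1E.
rewrite scale0r add0r; congr (_ * _); rewrite derive1E; exact: (congr1 (fun f => f (g y)) (@derive_expR R)).
Qed.

End Exp.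

Section Coords.
Variables (R : realType) (m n : nat).
Local Notation N := (m + m + n * m)%N.
Local Notation qI a := (lshift (n * m)%N (lshift m a)).
Local Notation pI a := (lshift (n * m)%N (rshift m a)).
Local Notation cI k := (rshift (m + m)%N k).
Local Notation e i := (delta_mx 0 i : 'rV[R]_N).
Implicit Types (w x y : 'rV[R]_N).

Lemma lsub_lin (t : R) w x : lsubmx (t *: w + x) = t *: lsubmx w + lsubmx x.
Proof. by apply/matrixP => a b; rewrite !mxE. Qed.
Lemma qof_lin (t : R) w x : qof (t *: w + x) = t *: qof w + qof x.
Proof. by apply/matrixP => a b; rewrite !mxE. Qed.
Lemma pof_lin (t : R) w x : pof (t *: w + x) = t *: pof w + pof x.
Proof. by apply/matrixP => a b; rewrite !mxE. Qed.
Lemma chiof_lin (t : R) w x : chiof (t *: w + x) = t *: chiof w + chiof x.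
Proof. by apply/matrixP => a b; rewrite !mxE. Qed.

Lemma Const_l (phi : 'rV[R]_(m + m)%N -> R) w : lsubmx w = 0 ->
  Const w (fun y => phi (lsubmx y)).
Proof. by move=> w0 x t; rewrite lsub_lin w0 scaler0 add0r. Qed.
Lemma Const_q (phi : 'rV[R]_m -> R) w : (qof w = 0 \/ forall a b, phi a = phi b) ->
  Const w (fun y => phi (qof y)).
Proof. by case=> [w0|H] x t; [rewrite qof_lin w0 scaler0 add0r | apply: H]. Qed.
Lemma Const_p (phi : 'rV[R]_m -> R) w : pof w = 0 -> Const w (fun y => phi (pof y)).
Proof. by move=> w0 x t; rewrite pof_lin w0 scaler0 add0r. Qed.
Lemma Const_chi (phi : 'rV[R]_(n * m)%N -> R) w : chiof w = 0 -> Const w (fun y => phi (chiof y)).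
Proof. by move=> w0 x t; rewrite chiof_lin w0 scaler0 add0r. Qed.
Lemma Const_chij j w : chiof w 0 j = 0 ->
  Const w (fun y => chiof y 0 j * chiof y 0 j).
Proof.
move=> w0 x t; rewrite chiof_lin.
have -> : (t *: chiof w + chiof x) 0 j = t * chiof w 0 j + chiof x 0 j by rewrite !mxE.
by rewrite w0 mulr0 add0r.
Qed.

Lemma lsub_c k : lsubmx (e (cI k)) = 0.
Proof. by apply/matrixP => a b; rewrite !mxE eq_lrshift andbF. Qed.
Lemma qof_p a : qof (e (pI a)) = 0.
Proof. by apply/matrixP => r c; rewrite !mxE eq_lshift eq_lrshift andbF. Qed.
Lemma qof_c k : qof (e (cI k)) = 0.
Proof. by apply/matrixP => r c; rewrite !mxE eq_lrshift andbF. Qed.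
Lemma pof_q a : pof (e (qI a)) = 0.
Proof. by apply/matrixP => r c; rewrite !mxE eq_lshift eq_rlshift andbF. Qed.
Lemma pof_c k : pof (e (cI k)) = 0.
Proof. by apply/matrixP => r c; rewrite !mxE eq_lrshift andbF. Qed.
Lemma chi_q a : chiof (e (qI a)) = 0.
Proof. by apply/matrixP => r c; rewrite !mxE eq_rlshift andbF. Qed.
Lemma chi_p a : chiof (e (pI a)) = 0.
Proof. by apply/matrixP => r c; rewrite !mxE eq_rlshift andbF. Qed.
Lemma chi_c k l : chiof (e (cI k)) 0 l = (l == k)%:R.
Proof. by rewrite !mxE eq_rshift. Qed.

End Coords.

Section FGood.
Variables (R : realType) (m n : nat).
Local Notation N := (m + m + n * m)%N.
Local Notation qI a := (lshift (n * m)%N (lshift m a)).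
Local Notation pI a := (lshift (n * m)%N (rshift m a)).
Local Notation cI k := (rshift (m + m)%N k).
Local Notation e i := (delta_mx 0 i : 'rV[R]_N).
Variables (beta : R) (U : 'rV[R]_m -> R) (mm : 'rV[R]_m -> 'M[R]_m).
Hypothesis dU : forall q, differentiable U q.
Hypothesis dmm : forall q, differentiable mm q.
Hypothesis detpos : forall q, 0 < \det (mm q).

Definition Qf (y : 'rV[R]_N) := \sum_k \sum_l
   (invmx (mm (qof y)) l k * (pof y 0 l * pof y 0 k)).
Definition Xf (y : 'rV[R]_N) := \sum_j (chiof y 0 j * chiof y 0 j).
Definition Gf (y : 'rV[R]_N) := U (qof y) + 2^-1 * Qf y
   + 2^-1 * beta^-1 * ln (\det (mm (qof y))).

Lemma F_eq : (@Fhat R m n beta U mm) = fun y => Gf y + 2^-1 * Xf y.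
Proof.
apply/funext => y; rewrite /Fhat /Gf /Qf /Xf /=; congr (_ + _ + _ + 2^-1 * _).
  congr (_ * _); rewrite !mxE; apply: eq_bigr => k _; rewrite mxE big_distrl /=.
  apply: eq_bigr => l _; rewrite !mxE; ring.
by rewrite !mxE; apply: eq_bigr => j _; rewrite !mxE.
Qed.

Lemma diff_qof (y : 'rV[R]_N) : differentiable (@qof R m n) y.
Proof.
have -> : @qof R m n = lsubmx \o lsubmx by [].
by apply: differentiable_comp; apply: differentiable_lsubmx.
Qed.
Lemma diff_pof (y : 'rV[R]_N) : differentiable (@pof R m n) y.
Proof.
have -> : @pof R m n = rsubmx \o lsubmx by [].
by apply: differentiable_comp; [apply: differentiable_lsubmx|apply: differentiable_rsubmx].
Qed.
Lemma diff_chiof (y : 'rV[R]_N) : differentiable (@chiof R m n) y.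
Proof. exact: differentiable_rsubmx. Qed.

Lemma dUq y : differentiable (fun y : 'rV[R]_N => U (qof y)) y.
Proof. exact: (differentiable_comp (diff_qof y) (dU _)). Qed.
Lemma dmmq y : ED (fun y : 'rV[R]_N => mm (qof y)) y.
Proof. exact/ED_diff/(differentiable_comp (diff_qof y) (dmm _)). Qed.
Lemma dNq y : ED (fun y : 'rV[R]_N => invmx (mm (qof y))) y.
Proof.
apply: ED_inv (dmmq y) => z; rewrite unitmxE unitfE.
by have := detpos (qof z); rewrite lt0r => /andP[].
Qed.
Lemma dpj y l : differentiable (fun y : 'rV[R]_N => pof y 0 l) y.
Proof. exact: (ED_diff (diff_pof y)). Qed.
Lemma dchij y l : differentiable (fun y : 'rV[R]_N => chiof y 0 l) y.
Proof. exact: (ED_diff (diff_chiof y)). Qed.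
Lemma dlnq y : differentiable (fun y : 'rV[R]_N => ln (\det (mm (qof y)))) y.
Proof. by apply: diff_ln; [exact: diff_det (dmmq y)| exact: detpos]. Qed.
Lemma dQf y : differentiable Qf y.
Proof.
apply: diff_bsum => k _; apply: diff_bsum => l _.
apply: differentiableM; first exact: dNq.
exact: differentiableM (dpj y l) (dpj y k).
Qed.
Lemma dXf y : differentiable Xf y.
Proof. apply: diff_bsum => j _; exact: differentiableM (dchij y j) (dchij y j). Qed.
Lemma dGf y : differentiable Gf y.
Proof.
apply: differentiableD; first apply: differentiableD.
- exact: dUq.
- exact: diff_mulc (dQf y).
- exact: diff_mulc (dlnq y).
Qed.
Lemma dF y : differentiable ((@Fhat R m n beta U mm)) y.
Proof. rewrite F_eq; apply: differentiableD; [exact: dGf|exact: diff_mulc (dXf y)]. Qed.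

Lemma derF y v : derivable ((@Fhat R m n beta U mm)) y v.
Proof. exact/diff_derivable/dF. Qed.

End FGood.

Section FGood2.
Variables (R : realType) (m n : nat).
Local Notation N := (m + m + n * m)%N.
Local Notation qI a := (lshift (n * m)%N (lshift m a)).
Local Notation pI a := (lshift (n * m)%N (rshift m a)).
Local Notation cI k := (rshift (m + m)%N k).
Local Notation e i := (delta_mx 0 i : 'rV[R]_N).
Variables (beta : R) (U : 'rV[R]_m -> R) (mm : 'rV[R]_m -> 'M[R]_m).
Hypothesis dU : forall q, differentiable U q.
Hypothesis dmm : forall q, differentiable mm q.
Hypothesis detpos : forall q, 0 < \det (mm q).
Local Notation F := (@Fhat R m n beta U mm).

Lemma GoodX_l u v : Const u (@Xf R m n) -> Good u v (fun y => 2^-1 * @Xf R m n y).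
Proof.
move=> C; apply: Good_scale; apply: Good_constu => // y.
exact/diff_derivable/dXf.
Qed.

Lemma GoodG_v u v : Const v (@Gf R m n beta U mm) -> Good u v (@Gf R m n beta U mm).
Proof.
move=> C; apply: Good_constv => // y; exact/diff_derivable/dGf.
Qed.

Lemma ConstG_c k : Const (e (cI k)) (@Gf R m n beta U mm).
Proof.
rewrite /Gf /Qf; apply: (@Const_l R m n (fun M => U (lsubmx M) + 2^-1 * (\sum_k \sum_l
   (invmx (mm (lsubmx M)) l k * (rsubmx M 0 l * rsubmx M 0 k)))
   + 2^-1 * beta^-1 * ln (\det (mm (lsubmx M)))) (e (cI k))); exact: lsub_c.
Qed.

Lemma ConstX_q a : Const (e (qI a)) (@Xf R m n).
Proof. rewrite /Xf; apply: (@Const_chi R m n (fun c => \sum_j (c 0 j * c 0 j)) (e (qI a))); exact: chi_q. Qed.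
Lemma ConstX_p a : Const (e (pI a)) (@Xf R m n).
Proof. rewrite /Xf; apply: (@Const_chi R m n (fun c => \sum_j (c 0 j * c 0 j)) (e (pI a))); exact: chi_p. Qed.

Lemma Good_qp a b : Good (e (qI a)) (e (pI b)) F.
Proof.
rewrite F_eq; apply: Good_add; last exact/GoodX_l/ConstX_q.
apply: Good_add; first apply: Good_add.
- apply: Good_constv.
    apply: (@Const_q R m n U (e (pI b))); left; exact: qof_p.
  move=> y; exact/diff_derivable/dUq.
- apply: Good_scale; rewrite /Qf; apply: Good_sum => k _; apply: Good_sum => l _.
  apply: (Good_prod (f := fun y => invmx (mm (qof y)) l k)
                    (g := fun y => pof y 0 l * pof y 0 k)).
  + apply: (@Const_q R m n (fun q => invmx (mm q) l k) (e (pI b))); left; exact: qof_p.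
  + apply: (@Const_p R m n (fun p => p 0 l * p 0 k) (e (qI a))); exact: pof_q.
  + move=> y; apply/diff_derivable; exact: dNq.
  + move=> y; apply/diff_derivable; exact: differentiableM (dpj y l) (dpj y k).
- apply: Good_scale; apply: Good_constv.
    apply: (@Const_q R m n (fun q => ln (\det (mm q))) (e (pI b))); left; exact: qof_p.
  move=> y; exact/diff_derivable/dlnq.
Qed.

Lemma Good_pc a k : Good (e (pI a)) (e (cI k)) F.
Proof.
rewrite F_eq; apply: Good_add; last exact/GoodX_l/ConstX_p.
apply: GoodG_v; exact: ConstG_c.
Qed.

Lemma Good_cc k l : k != l -> Good (e (cI k)) (e (cI l)) F.
Proof.
move=> kl; rewrite F_eq; apply: Good_add; first by apply: GoodG_v; exact: ConstG_c.
apply: Good_scale; rewrite /Xf; apply: Good_sum => j _.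
have dj (i : 'I_(n * m)%N) y w : derivable (fun y : 'rV[R]_N => chiof y 0 i * chiof y 0 i) y w.
  apply/diff_derivable. exact: differentiableM (dchij y i) (dchij y i).
have [jk|jk] := eqVneq j k.
  rewrite jk. apply: Good_constv; last by move=> y; exact: (dj k y).
  apply: (@Const_chij R m n k (e (cI l))).
  by rewrite chi_c (negbTE kl).
apply: Good_constu; last by move=> y; exact: (dj j y).
apply: (@Const_chij R m n j (e (cI k))).
by rewrite chi_c (negbTE jk).
Qed.

End FGood2.

Unset Implicit Arguments. Set Strict Implicit.

Section Rho.
Variables (R : realType) (m n : nat).
Local Notation N := (m + m + n * m)%N.
Variables (c beta : R) (U : 'rV[R]_m -> R) (mm : 'rV[R]_m -> 'M[R]_m).
Hypothesis bn0 : beta != 0.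
Hypothesis dU : forall q, differentiable U q.
Hypothesis dmm : forall q, differentiable mm q.
Hypothesis detpos : forall q, 0 < \det (mm q).
Local Notation F := (@Fhat R m n beta U mm).
Local Notation rho := (@rho0 R m n c beta U mm).

Definition Kc := c * (Num.sqrt ((2 * pi) ^+ m))^-1.

Lemma rho_eq : rho = fun y => Kc * expR (- beta * F y).
Proof.
apply/funext => y; rewrite /rho0 /Fhat /Kc /=.
set a := U _; set b := (_ *m _ *m _) 0 0; set x := (_ *m _) 0 0.
set d := \det _; set s := Num.sqrt _.
have dp : 0 < d by exact: detpos.
have sd : Num.sqrt d = expR (2^-1 * ln d).
  rewrite -powR12_sqrt ?ltW // /powR; by rewrite gt_eqF.
have -> : - beta * (a + 2^-1 * b + 2^-1 * beta^-1 * ln d + 2^-1 * x) =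
   - beta * (a + 2^-1 * b + 2^-1 * x) + - (2^-1 * ln d) by field.
rewrite expRD expRN -sd invfM; ring.
Qed.

Lemma dFv y v : derivable F y v.
Proof. exact: (derF (n:=n) dU dmm detpos). Qed.

Lemma rho_der y v : derivable rho y v /\ 'D_v rho y = - beta * rho y * 'D_v F y.
Proof.
rewrite rho_eq.
have dG : derivable (fun x => - beta * F x) y v.
  apply: derivableM; [exact: derivable_cst | exact: dFv].
have [de De] := derive_expR_comp dG.
split.
  apply: derivableM; [exact: derivable_cst | exact: de].
rewrite (deriveMl Kc de) De (deriveMl (- beta) (dFv y v)).
ring.
Qed.

End Rho.

Section Entries.
Variables (R : realType) (m n : nat).
Local Notation N := (m + m + n * m)%N.
Local Notation qI a := (lshift (n * m)%N (lshift m a)).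
Local Notation pI a := (lshift (n * m)%N (rshift m a)).
Local Notation cI k := (rshift (m + m)%N k).

Lemma idx_cases (i : 'I_N) :
  (exists a, i = qI a) \/ (exists a, i = pI a) \/ (exists k, i = cI k).
Proof.
case: (fintype.split i) (splitK i) => [i'|k] /= <-; last by right; right; exists k.
case: (fintype.split i') (splitK i') => [a|a] /= <-; first by left; exists a.
by right; left; exists a.
Qed.

Variables (Hm : 'M[R]_(m, n * m)) (G : 'M[R]_(n * m)%N).
Local Notation J := (Jhat Hm G).

Lemma J_qq a b : J (qI a) (qI b) = 0.
Proof. by rewrite /Jhat block_mxEul block_mxEul mxE. Qed.
Lemma J_qp a b : J (qI a) (pI b) = (a == b)%:R.
Proof. by rewrite /Jhat block_mxEul block_mxEur mxE. Qed.
Lemma J_pq a b : J (pI a) (qI b) = - (a == b)%:R.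
Proof. by rewrite /Jhat block_mxEul block_mxEdl !mxE. Qed.
Lemma J_pp a b : J (pI a) (pI b) = 0.
Proof. by rewrite /Jhat block_mxEul block_mxEdr mxE. Qed.
Lemma J_qc a k : J (qI a) (cI k) = 0.
Proof. by rewrite /Jhat block_mxEur col_mxEu mxE. Qed.
Lemma J_pc a k : J (pI a) (cI k) = - Hm a k.
Proof. by rewrite /Jhat block_mxEur col_mxEd mxE. Qed.
Lemma J_cq k a : J (cI k) (qI a) = 0.
Proof. by rewrite /Jhat block_mxEdl row_mxEl mxE. Qed.
Lemma J_cp k a : J (cI k) (pI a) = Hm a k.
Proof. by rewrite /Jhat block_mxEdl row_mxEr mxE. Qed.
Lemma J_cc k l : J (cI k) (cI l) = G k l.
Proof. by rewrite /Jhat block_mxEdr. Qed.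

Variable (Dm : 'M[R]_(n * m)%N).
Local Notation S := (Sighat Dm *m (Sighat Dm)^T).

Lemma S_eq : S = block_mx 0 0 0 (Dm *m Dm^T).
Proof. by rewrite /Sighat tr_col_mx mul_col_row trmx0 !mul0mx mulmx0. Qed.

Lemma S_l (i : 'I_N) j : S i (lshift (n * m)%N j) = 0.
Proof.
rewrite S_eq; case: (fintype.split i) (splitK i) => [i'|k] /= <-.
  by rewrite block_mxEul mxE.
by rewrite block_mxEdl mxE.
Qed.
Lemma S_l' i (j : 'I_N) : S (lshift (n * m)%N i) j = 0.
Proof.
rewrite S_eq; case: (fintype.split j) (splitK j) => [j'|k] /= <-.
  by rewrite block_mxEul mxE.
by rewrite block_mxEur mxE.
Qed.
Lemma S_cc k l : S (cI k) (cI l) = (Dm *m Dm^T) k l.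
Proof. by rewrite S_eq block_mxEdr. Qed.

End Entries.

Section CMat.
Variables (R : realType) (m n : nat).
Local Notation N := (m + m + n * m)%N.
Local Notation qI a := (lshift (n * m)%N (lshift m a)).
Local Notation pI a := (lshift (n * m)%N (rshift m a)).
Local Notation cI k := (rshift (m + m)%N k).
Local Notation e i := (delta_mx 0 i : 'rV[R]_N).
Variables (beta : R) (H : 'rV[R]_m -> 'M[R]_(m, n * m)) (Gam D : 'rV[R]_m -> 'M[R]_(n * m)%N).
Hypothesis hFD : forall q, D q *m (D q)^T = - beta^-1 *: (Gam q + (Gam q)^T).

Definition Cm (q : 'rV[R]_m) : 'M[R]_N :=
  beta^-1 *: Jhat (H q) (Gam q) + 2^-1 *: (Sighat (D q) *m (Sighat (D q))^T).

Lemma CmE q i j : Cm q i j = beta^-1 * Jhat (H q) (Gam q) i j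
   + 2^-1 * (Sighat (D q) *m (Sighat (D q))^T) i j.
Proof. by rewrite /Cm !mxE. Qed.

Lemma DDE q k l : (D q *m (D q)^T) k l = - beta^-1 * (Gam q k l + Gam q l k).
Proof. by rewrite hFD !mxE. Qed.

Lemma Cm_anti q i j : Cm q j i = - Cm q i j.
Proof.
rewrite !CmE.
case: (@idx_cases m n i) => [[a ->]|[[a ->]|[k ->]]];
case: (@idx_cases m n j) => [[b ->]|[[b ->]|[l ->]]];
rewrite ?J_qq ?J_qp ?J_pq ?J_pp ?J_qc ?J_pc ?J_cq ?J_cp ?J_cc ?S_l ?S_l' ?S_cc ?DDE ?(eq_sym a b);
try ring; set bi := beta^-1; field; done.
Qed.

Lemma Cm_diag q i : Cm q i i = 0.
Proof.
have := Cm_anti q i i; move/eqP; rewrite -subr_eq0 opprK -mulr2n mulrn_eq0 /=.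
by move/eqP.
Qed.

Lemma Cm_const_q a j q q' : Cm q (qI a) j = Cm q' (qI a) j.
Proof.
rewrite !CmE ?S_l'.
by case: (@idx_cases m n j) => [[b ->]|[[b ->]|[l ->]]];
  rewrite ?J_qq ?J_qp ?J_qc.
Qed.

End CMat.

Section CGood.
Variables (R : realType) (m n : nat).
Local Notation N := (m + m + n * m)%N.
Local Notation qI a := (lshift (n * m)%N (lshift m a)).
Local Notation pI a := (lshift (n * m)%N (rshift m a)).
Local Notation cI k := (rshift (m + m)%N k).
Local Notation e i := (delta_mx 0 i : 'rV[R]_N).
Variables (beta : R) (U : 'rV[R]_m -> R) (mm : 'rV[R]_m -> 'M[R]_m).
Variables (H : 'rV[R]_m -> 'M[R]_(m, n * m)) (Gam D : 'rV[R]_m -> 'M[R]_(n * m)%N).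
Hypothesis hFD : forall q, D q *m (D q)^T = - beta^-1 *: (Gam q + (Gam q)^T).
Hypothesis dU : forall q, differentiable U q.
Hypothesis dmm : forall q, differentiable mm q.
Hypothesis detpos : forall q, 0 < \det (mm q).
Local Notation F := (@Fhat R m n beta U mm).
Local Notation C := (@Cm R m n beta H Gam D).

Lemma Cconst i j : Const (e i) (fun y : 'rV[R]_N => C (qof y) i j).
Proof.
case: (@idx_cases m n i) => [[a ->]|[[a ->]|[k ->]]]; apply: (@Const_q R m n (fun q => C q _ j) (e _)).
- by right => q q'; exact: (@Cm_const_q R m n beta H Gam D a j q q').
- by left; apply: qof_p.
- by left; apply: qof_c.
Qed.

Lemma Sconst i j : Const (e j)
   (fun y : 'rV[R]_N => (Sighat (D (qof y)) *m (Sighat (D (qof y)))^T) i j).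
Proof.
case: (@idx_cases m n j) => [[a ->]|[[a ->]|[k ->]]];
  apply: (@Const_q R m n (fun q => (Sighat (D q) *m (Sighat (D q))^T) i _) (e _)).
- by right => q q'; rewrite !S_l.
- by right => q q'; rewrite !S_l.
- by left; apply: qof_c.
Qed.

Lemma C_good q i j : C q i j != 0 -> Good (e j) (e i) F.
Proof.
rewrite CmE.
case: (@idx_cases m n i) => [[a ->]|[[a ->]|[k ->]]];
case: (@idx_cases m n j) => [[b ->]|[[b ->]|[l ->]]];
rewrite ?J_qq ?J_qc ?J_pp ?J_cq ?S_l ?S_l' ?mulr0 ?addr0;
try (rewrite eqxx; move=> F0; exfalso; exact: (negP F0 isT)); move=> Hnz.
- apply: Good_sym; apply: (Good_qp beta dU dmm detpos).
- apply: (Good_qp beta dU dmm detpos).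
- apply: Good_sym; apply: (Good_pc beta dU dmm detpos).
- apply: (Good_pc beta dU dmm detpos).
- have [kl|kl] := eqVneq l k.
    exfalso; move: Hnz; rewrite kl -CmE (@Cm_diag R m n beta H Gam D hFD q (cI k)) eqxx.
    move=> F0; exact: (negP F0 isT).
  apply: (Good_cc beta dU dmm detpos); exact: kl.
Qed.

End CGood.

Section Gen2.
Variables (R : realType) (V : normedModType R).

Lemma derive_bsum (I : Type) (r : seq I) (P : pred I) (G : I -> V -> R) y v :
  (forall i, P i -> derivable (G i) y v) ->
  derivable (fun x => \sum_(i <- r | P i) G i x) y v /\
  'D_v (fun x => \sum_(i <- r | P i) G i x) y = \sum_(i <- r | P i) 'D_v (G i) y.
Proof.
move=> dG; elim: r => [|a r [IH1 IH2]].
  have -> : (fun x => \sum_(i <- [::] | P i) G i x) = cst 0.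
    by apply/funext => x; rewrite big_nil.
  rewrite big_nil; split; first exact: derivable_cst.
  exact: derive_cst.
case Pa: (P a).
  have -> : (fun x => \sum_(i <- a :: r | P i) G i x) =
     (G a + (fun x => \sum_(i <- r | P i) G i x)).
    by apply/funext => x; rewrite big_cons Pa.
  rewrite big_cons Pa; split.
    exact: (derivableD (dG a Pa) IH1).
  rewrite (deriveD (dG a Pa) IH1) IH2; reflexivity.
have -> : (fun x => \sum_(i <- a :: r | P i) G i x) =
   (fun x => \sum_(i <- r | P i) G i x).
  by apply/funext => x; rewrite big_cons Pa.
rewrite big_cons Pa; split; [exact: IH1|exact: IH2].
Qed.

Lemma hsym_gen (rho F : V -> R) (k : R) u v z :
  (forall y w, derivable rho y w /\ 'D_w rho y = k * rho y * 'D_w F y) ->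
  Good u v F ->
  [/\ derivable ('D_u rho) z v, derivable ('D_v rho) z u &
      'D_v ('D_u rho) z = 'D_u ('D_v rho) z].
Proof.
move=> rd G.
have [dFu dFv dDuv dDvu E] := G z.
have Eu : 'D_u rho = (fun y => k * rho y) * 'D_u F.
  by apply/funext => y; rewrite (rd y u).2.
have Ev : 'D_v rho = (fun y => k * rho y) * 'D_v F.
  by apply/funext => y; rewrite (rd y v).2.
have dk w : derivable (fun y => k * rho y) z w.
  exact: (derivableM (derivable_cst k z w) (rd z w).1).
have Dk w : 'D_w (fun y => k * rho y) z = k * (k * rho z * 'D_w F z).
  by rewrite (deriveMl k (rd z w).1) (rd z w).2.
rewrite Eu Ev; split.
- exact: (derivableM (dk v) dDuv).
- exact: (derivableM (dk u) dDvu).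
- rewrite (deriveM (dk v) dDuv) (deriveM (dk u) dDvu) Dk Dk E /=.
  rewrite /GRing.scale /=; ring.
Qed.

End Gen2.

Lemma anti_sum (R : realType) (N : nat) (C h : 'I_N -> 'I_N -> R) :
  (forall i j, C j i = - C i j) -> (forall i j, C i j != 0 -> h i j = h j i) ->
  \sum_i \sum_j C i j * h i j = 0.
Proof.
move=> Ca Ch.
set S := \sum_i \sum_j C i j * h i j.
have : S = - S.
  rewrite {1}/S exchange_big /S -sumrN; apply: eq_bigr => a _.
  rewrite -sumrN; apply: eq_bigr => b _.
  rewrite Ca; have [->|nz] := eqVneq (C a b) 0; first by rewrite oppr0 !mul0r oppr0.
  by rewrite (Ch a b nz) mulNr.
move=> E; lra.
Qed.

Local Close Scope classical_set_scope.
Local Open Scope ring_scope.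

Theorem proposition2 (R : realType) (m n : nat) (hm : (0 < m)%N) (hn : (0 < n)%N)
    (beta : R) (hbeta : 0 < beta)
    (U : 'rV[R]_m -> R) (mm : 'rV[R]_m -> 'M[R]_m)
    (H : 'rV[R]_m -> 'M[R]_(m, n * m)) (Gam D : 'rV[R]_m -> 'M[R]_(n * m))
    (sU : smooth U) (smm : smooth mm) (sH : smooth H)
    (sGam : smooth Gam) (sD : smooth D)
    (mspd : forall q, spd (mm q))
    (hFD : forall q, D q *m (D q)^T = - beta^-1 *: (Gam q + (Gam q)^T))
    (c : R) :
  forall z : 'rV[R]_(m + m + n * m),
    FP_rhs beta U mm H Gam D (@rho0 R m n c beta U mm) z = 0.
Proof.
move=> z.
have dU : forall q, differentiable U q by move=> q; exact: (sU [::] q).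
have dmm : forall q, differentiable mm q by move=> q; exact: (smm [::] q).
have detpos : forall q, 0 < \det (mm q) by move=> q; exact: spd_det_gt0.
have bn0 : beta != 0 by rewrite gt_eqF.
pose F := @Fhat R m n beta U mm.
pose rho := @rho0 R m n c beta U mm.
have rd : forall y w, derivable rho y w /\ 'D_w rho y = - beta * rho y * 'D_w F y.
  move=> y w; exact: (rho_der R m n c beta U mm bn0 dU dmm detpos y w).
pose C := @Cm R m n beta H Gam D.
have stepA : forall i, (fun y => - (drift beta U mm H Gam y) i 0 * rho y
    + 2^-1 * \sum_j partial j (fun y' => (Sighat (D (qof y')) *m (Sighat (D (qof y')))^T) i j * rho y') y)
    = (fun y => \sum_j C (qof y) i j * partial j rho y).
  move=> i; apply/funext => y.
  have Ed : (drift beta U mm H Gam y) i 0 =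
      \sum_j Jhat (H (qof y)) (Gam (qof y)) i j * partial j F y.
    rewrite /drift mxE; apply: eq_bigr => j _; rewrite /grad [X in _ * X]mxE; reflexivity.
  have Ei : forall j, partial j (fun y' => (Sighat (D (qof y')) *m (Sighat (D (qof y')))^T) i j * rho y') y
      = (Sighat (D (qof y)) *m (Sighat (D (qof y)))^T) i j * partial j rho y.
    move=> j; exact: (ConstM (Sconst R m n D i j) (fun _ => (rd y _).1)).2.
  have Er : forall j, partial j rho y = - beta * rho y * partial j F y.
    move=> j; exact: (rd y _).2.
  rewrite Ed (eq_bigr _ (fun j _ => Ei j)).
  rewrite mulNr mulr_suml mulr_sumr -sumrN -big_split; apply: eq_bigr => j _.
  rewrite /C CmE !Er /=. field. exact: bn0.
rewrite /FP_rhs.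
transitivity (\sum_i \sum_j C (qof z) i j * partial i (fun y => partial j rho y) z).
  apply: eq_bigr => i _.
  rewrite -/rho (stepA i) /partial.
  have dj : forall j, derivable (fun y => C (qof y) i j * derive rho y (delta_mx 0 j)) z (delta_mx 0 i)
     /\ derive (fun y => C (qof y) i j * derive rho y (delta_mx 0 j)) z (delta_mx 0 i)
       = C (qof z) i j * derive (fun y => derive rho y (delta_mx 0 j)) z (delta_mx 0 i).
    move=> j; apply: ConstM; first exact: (Cconst R m n beta H Gam D i j).
    move=> nz; have G := C_good R m n beta U mm H Gam D hFD dU dmm detpos (qof z) i j nz.
    by have [? _ _] := hsym_gen _ _ rho F (-beta) _ _ z rd G.
  rewrite (derive_bsum _ _ _ _ _ _ _ _ (fun j _ => (dj j).1)).2.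
  apply: eq_bigr => j _; exact: (dj j).2.
apply: anti_sum.
- move=> i j; exact: (Cm_anti R m n beta H Gam D hFD (qof z) i j).
- move=> i j nz; have G := C_good R m n beta U mm H Gam D hFD dU dmm detpos (qof z) i j nz.
  by have [_ _ E] := hsym_gen _ _ rho F (-beta) _ _ z rd G.
Qed.
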